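(* Let $G$ be a finitely generated group hyperbolic relative to a finite collection $\mathcal P=\{P_\lambda\}_{\lambda\in\Lambda}$, $S$ a finite generating set, and $n\ge1$. Then the $G$-stabiliser of the barycentre of any simplex of the $n$-Rips complex $\Gamma_n^\blacktriangle$ that is not a vertex is finite.
   Context: Let $\Gamma$ be the Cayley graph of $G$ with respect to $S$, $V=G$, $W$ the set of cosets $gP_\lambda$. Relative hyperbolicity means the coned-off Cayley graph (vertex set $V\cup W$, edges of $\Gamma$ plus an edge $(v,w)$ whenever $v\in w$) is fine and $\delta$-hyperbolic. Extend $|\cdot,\cdot|_S$ to $V\cup W$ via distances in $\Gamma$ between the corresponding elements/cosets. $\Gamma_n$ has vertex set $V\cup W$ and an edge between $u\ne u'$ whenever $|u,u'|_S\le n$; $\Gamma_n^\blacktriangle$ is obtained by spanning simplices on all cliques of $\Gamma_n$, with $G$ acting by left multiplication. *)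

(* Defs.v *)
From Stdlib Require Import Reals List Lia ZArith ClassicalEpsilon.
Import ListNotations.

Record Group := {
  gcar :> Type;
  gmul : gcar -> gcar -> gcar;
  ginv : gcar -> gcar;
  gone : gcar;
  gmulA : forall x y z, gmul x (gmul y z) = gmul (gmul x y) z;
  gmul1g : forall x, gmul gone x = x;
  gmulVg : forall x, gmul (ginv x) x = gone }.

Arguments gmul {G} : rename.
Arguments ginv {G} : rename.
Arguments gone {G} : rename.

Section Graphs.
Context {V : Type} (valid : V -> Prop) (adj : V -> V -> Prop).

Fixpoint chain (l : list V) : Prop :=
  match l with
  | x :: ((y :: _) as t) => adj x y /\ chain t
  | _ => True
  end.

Definition path_len (x y : V) (k : nat) : Prop :=
  exists l : list V, length l = S k /\ hd x l = x /\ last l x = y /\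
    Forall valid l /\ chain l.

Definition graph_connected : Prop :=
  forall x y, valid x -> valid y -> exists k, path_len x y k.

Definition graph_dist (x y : V) (k : nat) : Prop :=
  path_len x y k /\ forall k', path_len x y k' -> k <= k'.

(* delta-hyperbolicity via the Gromov four-point condition on the vertex set,
   written with doubled Gromov products:
   2 (x|y)_w = d(x,w) + d(y,w) - d(x,y). *)
Definition graph_hyperbolic : Prop :=
  graph_connected /\
  exists delta : nat, forall x y z w dxy dxz dyz dxw dyw dzw,
    valid x -> valid y -> valid z -> valid w ->
    graph_dist x y dxy -> graph_dist x z dxz -> graph_dist y z dyz ->
    graph_dist x w dxw -> graph_dist y w dyw -> graph_dist z w dzw ->
    (Z.of_nat dxw + Z.of_nat dyw - Z.of_nat dxy >=
       Z.min (Z.of_nat dxw + Z.of_nat dzw - Z.of_nat dxz)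
             (Z.of_nat dyw + Z.of_nat dzw - Z.of_nat dyz) - 2 * Z.of_nat delta)%Z.

Definition circuit (c : list V) : Prop :=
  3 <= length c /\ NoDup c /\ Forall valid c /\
  exists v0 c', c = v0 :: c' /\ chain (c ++ [v0]).

Definition circuit_has_edge (c : list V) (a b : V) : Prop :=
  exists v0 c', c = v0 :: c' /\
  exists l1 l2, c ++ [v0] = l1 ++ a :: b :: l2 \/ c ++ [v0] = l1 ++ b :: a :: l2.

Definition graph_fine : Prop :=
  forall a b, valid a -> valid b -> adj a b -> forall k,
    exists L : list (list V), forall c,
      circuit c -> length c = k -> circuit_has_edge c a b -> In c L.
End Graphs.

Section RelHyp.
Context (G : Group) (Lam : Type) (P : Lam -> G -> Prop) (S : list G).

Definition is_subgroup (H : G -> Prop) : Prop :=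
  H gone /\ (forall x y, H x -> H y -> H (gmul x y)) /\ (forall x, H x -> H (ginv x)).

Definition letter (a : G) : Prop := In a S \/ exists s, In s S /\ a = ginv s.

Definition word_eval (w : list G) : G := fold_right gmul gone w.

Definition generates : Prop :=
  forall g : G, exists w, Forall letter w /\ g = word_eval w.

Definition wdist_le (a b : G) (k : nat) : Prop :=
  exists w, Forall letter w /\ length w <= k /\ gmul a (word_eval w) = b.

(* vertices of V ∪ W: group elements, and left cosets g P_lambda tagged by lambda *)
Inductive vtx : Type :=
| VG : G -> vtx
| VW : Lam -> (G -> Prop) -> vtx.

Definition lcoset (g : G) (l : Lam) : G -> Prop :=
  fun x => exists p, P l p /\ x = gmul g p.

Definition valid_vtx (v : vtx) : Prop :=
  match v with
  | VG _ => True
  | VW l C => exists g, C = lcoset g l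
  end.

Definition vset (v : vtx) : G -> Prop :=
  match v with
  | VG g => fun x => x = g
  | VW _ C => C
  end.

Definition cone_adj (u v : vtx) : Prop :=
  match u, v with
  | VG a, VG b => a <> b /\ exists s, In s S /\ (b = gmul a s \/ a = gmul b s)
  | VG a, VW _ C => C a
  | VW _ C, VG a => C a
  | _, _ => False
  end.

Definition rel_hyperbolic : Prop :=
  (forall l, is_subgroup (P l)) /\
  graph_fine valid_vtx cone_adj /\ graph_hyperbolic valid_vtx cone_adj.

Definition rips_adj (n : nat) (u v : vtx) : Prop :=
  u <> v /\ exists a b, vset u a /\ vset v b /\ wdist_le a b n.

Definition rips_simplex (n : nat) (sigma : list vtx) : Prop :=
  sigma <> [] /\ NoDup sigma /\ Forall valid_vtx sigma /\
  forall u v, In u sigma -> In v sigma -> u <> v -> rips_adj n u v.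

Definition act (g : G) (v : vtx) : vtx :=
  match v with
  | VG h => VG (gmul g h)
  | VW l C => VW l (fun x => C (gmul (ginv g) x))
  end.

(* points of the geometric realisation as barycentric-coordinate functions *)
Definition barycentre (sigma : list vtx) : vtx -> R :=
  fun v => if excluded_middle_informative (In v sigma)
           then (/ INR (length sigma))%R else 0%R.

Definition act_pt (g : G) (x : vtx -> R) : vtx -> R :=
  fun v => x (act (ginv g) v).

Definition stabiliser (x : vtx -> R) : G -> Prop :=
  fun g => forall v, act_pt g x v = x v.
End RelHyp.

Definition finite_set {T : Type} (A : T -> Prop) : Prop :=
  exists L : list T, forall t, A t -> In t L.

(* Main.v *)
Require Import Defs.
From Stdlib Require Import Reals List Lia Classical FunctionalExtensionality Arith ClassicalEpsilon.
Import ListNotations.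

Lemma g_mulgV (G : Group) (x : G) : gmul x (ginv x) = gone.
Proof.
  rewrite <- (gmul1g G (gmul x (ginv x))).
  rewrite <- (gmulVg G (ginv x)) at 1.
  rewrite <- gmulA, (gmulA _ (ginv x) x), gmulVg, gmul1g.
  apply gmulVg.
Qed.

Lemma g_mulg1 (G : Group) (x : G) : gmul x gone = x.
Proof. rewrite <- (gmulVg G x), gmulA, g_mulgV, gmul1g. reflexivity. Qed.

Lemma g_inv_uniq (G : Group) (y z : G) : gmul y z = gone -> y = ginv z.
Proof.
  intro H. rewrite <- (g_mulg1 G y), <- (g_mulgV G z), gmulA, H, gmul1g. reflexivity.
Qed.

Lemma g_invM (G : Group) (a b : G) : ginv (gmul a b) = gmul (ginv b) (ginv a).
Proof.
  symmetry; apply g_inv_uniq.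
  rewrite <- gmulA, (gmulA _ (ginv a) a), gmulVg, gmul1g, gmulVg. reflexivity.
Qed.

Lemma g_invK (G : Group) (a : G) : ginv (ginv a) = a.
Proof. symmetry; apply g_inv_uniq. apply g_mulgV. Qed.

Lemma g_KV (G : Group) (a x : G) : gmul (ginv a) (gmul a x) = x.
Proof. rewrite gmulA, gmulVg, gmul1g. reflexivity. Qed.

Lemma g_VK (G : Group) (a x : G) : gmul a (gmul (ginv a) x) = x.
Proof. rewrite gmulA, g_mulgV, gmul1g. reflexivity. Qed.

Lemma g_fix1 (G : Group) (h x : G) : gmul h x = x -> h = gone.
Proof.
  intro H. rewrite <- (g_mulg1 G h), <- (g_mulgV G x), gmulA, H. reflexivity.
Qed.

Lemma word_eval_app (G : Group) (u v : list G) :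
  word_eval G (u ++ v) = gmul (word_eval G u) (word_eval G v).
Proof.
  induction u as [|a u IH]; simpl. rewrite gmul1g; reflexivity.
  unfold word_eval in *; simpl. rewrite IH, gmulA. reflexivity.
Qed.

Lemma act_mul (G : Group) (Lam : Type) (g h : G) (u : vtx G Lam) :
  act G Lam (gmul g h) u = act G Lam g (act G Lam h u).
Proof.
  destruct u as [k|l C]; simpl. rewrite gmulA; reflexivity.
  f_equal. apply functional_extensionality; intro x. rewrite g_invM, gmulA. reflexivity.
Qed.

Lemma act_one (G : Group) (Lam : Type) (u : vtx G Lam) : act G Lam gone u = u.
Proof.
  destruct u as [k|l C]; simpl. rewrite gmul1g; reflexivity.
  f_equal. apply functional_extensionality; intro x.
  assert (ginv (@gone G) = gone) by (symmetry; apply g_inv_uniq; apply gmul1g).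
  rewrite H, gmul1g. reflexivity.
Qed.

Lemma act_VK (G : Group) (Lam : Type) (g : G) (u : vtx G Lam) :
  act G Lam (ginv g) (act G Lam g u) = u.
Proof. rewrite <- act_mul, gmulVg. apply act_one. Qed.

Lemma firstn_S_nth {A} (w : list A) k d : k < length w ->
  firstn (S k) w = firstn k w ++ [nth k w d].
Proof.
  revert k; induction w as [|a w IH]; intros k Hk; simpl in *. lia.
  destruct k; simpl. reflexivity. rewrite IH by lia. reflexivity.
Qed.

Lemma Forall_firstn' {A} (P : A -> Prop) w k : Forall P w -> Forall P (firstn k w).
Proof.
  intro H. rewrite <- (firstn_skipn k w) in H. apply Forall_app in H. tauto.
Qed.

Lemma Forall_skipn' {A} (P : A -> Prop) w k : Forall P w -> Forall P (skipn k w).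
Proof.
  intro H. rewrite <- (firstn_skipn k w) in H. apply Forall_app in H. tauto.
Qed.

Lemma chain_map_seq {V} (adj : V -> V -> Prop) (f : nat -> V) m : forall k,
  (forall i, k <= i < k + m -> adj (f i) (f (S i))) -> chain adj (map f (seq k (S m))).
Proof.
  induction m as [|m IH]; intros k H. simpl; auto.
  change (seq k (S (S m))) with (k :: seq (S k) (S m)).
  change (seq (S k) (S m)) with (S k :: seq (S (S k)) m).
  cbn [map chain]. split. apply H; lia.
  change (f (S k) :: map f (seq (S (S k)) m)) with (map f (seq (S k) (S m))).
  apply IH. intros i Hi; apply H; lia.
Qed.

Lemma eval_first_skip (G : Group) (w : list G) k :
  gmul (word_eval G (firstn k w)) (word_eval G (skipn k w)) = word_eval G w.
Proof. rewrite <- word_eval_app, firstn_skipn. reflexivity. Qed.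

Lemma core_fin (G : Group) (Lam : Type) (P : Lam -> G -> Prop) (Sg : list G)
  (l1 l2 : Lam) (C1 C2 : G -> Prop) (d : nat) (a b : G) (w : list G) :
  graph_fine (valid_vtx G Lam P) (cone_adj G Lam Sg) ->
  valid_vtx G Lam P (VW G Lam l1 C1) -> valid_vtx G Lam P (VW G Lam l2 C2) ->
  VW G Lam l1 C1 <> VW G Lam l2 C2 ->
  C1 a -> C2 b -> Forall (letter G Sg) w -> length w = d ->
  gmul a (word_eval G w) = b ->
  (forall a' b' w', C1 a' -> C2 b' -> Forall (letter G Sg) w' ->
      gmul a' (word_eval G w') = b' -> d <= length w') ->
  finite_set (fun h : G => (forall y, C1 (gmul (ginv h) y) <-> C1 y) /\
                           (forall y, C2 (gmul (ginv h) y) <-> C2 y)).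
Proof.
  intros Hfine Hv1 Hv2 Hne HC1 HC2 Hw Hlen Hab Hmin.
  set (c1 := VW G Lam l1 C1) in *. set (c2 := VW G Lam l2 C2) in *.
  set (x := fun i => gmul a (word_eval G (firstn i w))).
  assert (Hx0 : x 0 = a) by (unfold x; simpl; apply g_mulg1).
  assert (Hxd : x d = b) by (unfold x; rewrite <- Hlen, firstn_all; exact Hab).
  assert (Hskip : forall i, gmul (x i) (word_eval G (skipn i w)) = b).
  { intro i; unfold x. rewrite <- gmulA, eval_first_skip. exact Hab. }
  assert (Hshort : forall i j a', i < j <= d -> C1 a' ->
            gmul a' (word_eval G (firstn i w)) = x j -> False).
  { intros i j a' Hij Ha' He.
    assert (Hm := Hmin a' b (firstn i w ++ skipn j w) Ha' HC2).
    assert (Hl : length (firstn i w ++ skipn j w) = i + (d - j)).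
    { rewrite length_app, firstn_length_le, length_skipn; lia. }
    rewrite Hl in Hm.
    assert (d <= i + (d - j)); [|lia].
    apply Hm.
    - apply Forall_app; split; [apply Forall_firstn' | apply Forall_skipn']; exact Hw.
    - rewrite word_eval_app, gmulA, He. apply Hskip. }
  assert (Hinj : forall i j, i <= d -> j <= d -> x i = x j -> i = j).
  { intros i j Hi Hj E. destruct (Nat.lt_trichotomy i j) as [Hl|[Hl|Hl]]; auto.
    - exfalso; apply (Hshort i j a); auto. 
    - exfalso; apply (Hshort j i a); auto. }
  assert (Hstep : forall k, k < d -> exists s, In s Sg /\
            (x (S k) = gmul (x k) s \/ x k = gmul (x (S k)) s)).
  { intros k Hk. assert (Hf := firstn_S_nth w k gone ltac:(lia)).
    assert (Hl : letter G Sg (nth k w gone)).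
    { rewrite Forall_forall in Hw. apply Hw, nth_In; lia. }
    unfold x; rewrite Hf, word_eval_app. unfold word_eval at 2; simpl.
    rewrite g_mulg1.
    destruct Hl as [Hs|[s [Hs Es]]].
    - exists (nth k w gone); split; auto. left. rewrite gmulA; reflexivity.
    - exists s; split; auto. right. rewrite Es, <- !gmulA, gmulVg, g_mulg1. reflexivity. }
  assert (Hadj : forall g k, k < d ->
            cone_adj G Lam Sg (VG G Lam (gmul g (x k))) (VG G Lam (gmul g (x (S k)))) /\
            cone_adj G Lam Sg (VG G Lam (gmul g (x (S k)))) (VG G Lam (gmul g (x k)))).
  { intros g k Hk. destruct (Hstep k Hk) as [s [Hs Ho]].
    assert (Hn : gmul g (x k) <> gmul g (x (S k))).
    { intro E. assert (E' : x k = x (S k)).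
      { rewrite <- (g_KV G g (x k)), E, g_KV. reflexivity. }
      apply Hinj in E'; lia. }
    simpl; split; split; auto; exists s; split; auto.
    - destruct Ho as [E|E]; [left|right]; rewrite E, gmulA; reflexivity.
    - destruct Ho as [E|E]; [right|left]; rewrite E, gmulA; reflexivity. }
  destruct (Hfine c1 (VG G Lam (x 0)) Hv1 I ltac:(simpl; rewrite Hx0; exact HC1) (2*d+4))
    as [L HL].
  set (extract := fun c : list (vtx G Lam) =>
         match nth (d+3) c (VG G Lam gone) with
         | VG _ _ y => gmul y (ginv b) | _ => gone end).
  exists (gone :: map extract L).
  intros h [H1 H2].
  destruct (classic (h = gone)) as [Eh|Nh]; [left; auto|right].
  assert (HC1h : C1 (gmul h a)) by (apply H1; rewrite g_KV; exact HC1).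
  assert (HC2h : C2 (gmul h b)) by (apply H2; rewrite g_KV; exact HC2).
  assert (HC1i : C1 (gmul (ginv h) a)) by (apply H1; exact HC1).
  assert (Hcross : forall i j, i <= d -> j <= d -> x i <> gmul h (x j)).
  { intros i j Hi Hj E. destruct (Nat.lt_trichotomy i j) as [Hl|[Hl|Hl]].
    - apply (Hshort i j (gmul (ginv h) a)); auto.
      rewrite <- gmulA. change (gmul a (word_eval G (firstn i w))) with (x i).
      rewrite E, g_KV; reflexivity.
    - subst j. apply Nh. apply (g_fix1 G h (x i)); auto.
    - apply (Hshort j i (gmul h a)); auto.
      rewrite <- gmulA. change (gmul a (word_eval G (firstn j w))) with (x j).
      auto. }
  set (F := fun i => if i =? 0 then c1 else if i <=? S d then VG G Lam (x (i-1))
          else if i =? S (S d) then c2 else if i <=? 2*d+3 then VG G Lam (gmul h (x (2*d+3-i)))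
          else c1).
  apply in_map_iff. exists (map F (seq 0 (2*d+4))). split.
  { unfold extract. rewrite nth_indep with (d' := F 0) by (rewrite length_map, length_seq; lia).
    rewrite map_nth, seq_nth by lia. unfold F.
    replace (0 + (d+3) =? 0) with false by (symmetry; apply Nat.eqb_neq; lia).
    replace (0 + (d+3) <=? S d) with false by (symmetry; apply Nat.leb_gt; lia).
    replace (0 + (d+3) =? S (S d)) with false by (symmetry; apply Nat.eqb_neq; lia).
    replace (0 + (d+3) <=? 2*d+3) with true by (symmetry; apply Nat.leb_le; lia).
    replace (2 * d + 3 - (0 + (d + 3))) with d by lia.
    rewrite Hxd, <- gmulA, g_mulgV, g_mulg1. reflexivity. }
  assert (Fcls : forall i, i <= 2*d+4 ->
     (i = 0 /\ F i = c1) \/ (1 <= i <= S d /\ F i = VG G Lam (x (i-1))) \/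
     (i = S (S d) /\ F i = c2) \/
     (d+3 <= i <= 2*d+3 /\ F i = VG G Lam (gmul h (x (2*d+3-i)))) \/
     (i = 2*d+4 /\ F i = c1)).
  { intros i Hi. unfold F.
    destruct (Nat.eqb_spec i 0); [left; auto|].
    destruct (Nat.leb_spec i (S d)); [right; left; split; auto; lia|].
    destruct (Nat.eqb_spec i (S (S d))); [right; right; left; auto|].
    destruct (Nat.leb_spec i (2*d+3)); [right; right; right; left; split; auto; lia|].
    right; right; right; right; split; auto; lia. }
  assert (Hlen4 : length (map F (seq 0 (2*d+4))) = 2*d+4) by (rewrite length_map, length_seq; lia).
  apply HL.
  - split; [lia|]. split; [|split].
    + apply NoDup_map_NoDup_ForallPairs; [|apply seq_NoDup].
      intros i j Hi Hj. apply in_seq in Hi, Hj.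
      destruct (Fcls i ltac:(lia)) as [[Ei Fi]|[[Ei Fi]|[[Ei Fi]|[[Ei Fi]|[Ei Fi]]]]];
      destruct (Fcls j ltac:(lia)) as [[Ej Fj]|[[Ej Fj]|[[Ej Fj]|[[Ej Fj]|[Ej Fj]]]]];
      rewrite Fi, Fj; intro E; try lia; try discriminate; try (exfalso; apply Hne; auto; fail).
      * injection E; intro E'. apply Hinj in E'; lia.
      * injection E; intro E'. exfalso; apply (Hcross (i-1) (2*d+3-j)); auto; lia.
      * injection E; intro E'. exfalso; apply (Hcross (j-1) (2*d+3-i)); auto; lia.
      * injection E; intro E'.
        assert (E2 := f_equal (gmul (ginv h)) E'). rewrite !g_KV in E2.
        apply Hinj in E2; lia.
    + apply Forall_forall. intros v Hv. apply in_map_iff in Hv.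
      destruct Hv as [i [Ei Hi]]. apply in_seq in Hi. subst v.
      destruct (Fcls i ltac:(lia)) as [[_ Fi]|[[_ Fi]|[[_ Fi]|[[_ Fi]|[_ Fi]]]]];
      rewrite Fi; simpl; auto.
    + exists c1, (map F (seq 1 (2*d+3))). split.
      { replace (2*d+4) with (S (2*d+3)) by lia. reflexivity. }
      replace (map F (seq 0 (2*d+4)) ++ [c1]) with (map F (seq 0 (S (2*d+4)))).
      2:{ rewrite seq_S, map_app. 
          destruct (Fcls (2*d+4) ltac:(lia)) as [[? _]|[[? _]|[[? _]|[[? _]|[_ Fi]]]]]; try lia.
          rewrite Nat.add_0_l. cbn [map]. rewrite Fi. reflexivity. }
      apply chain_map_seq. intros i Hi.
      destruct (Fcls i ltac:(lia)) as [[Ei Fi]|[[Ei Fi]|[[Ei Fi]|[[Ei Fi]|[Ei Fi]]]]];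
      destruct (Fcls (S i) ltac:(lia)) as [[Ej Fj]|[[Ej Fj]|[[Ej Fj]|[[Ej Fj]|[Ej Fj]]]]];
      try lia; rewrite Fi, Fj.
      * subst i. simpl. rewrite Hx0. exact HC1.
      * replace (S i - 1) with (S (i - 1)) by lia.
        pose proof (proj1 (Hadj gone (i-1) ltac:(lia))) as A. rewrite !gmul1g in A. exact A.
      * replace (i - 1) with d by lia. simpl. rewrite Hxd. exact HC2.
      * replace (2 * d + 3 - S i) with d by lia. simpl. rewrite Hxd. exact HC2h.
      * replace (2 * d + 3 - i) with (S (2*d+3 - S i)) by lia.
        exact (proj2 (Hadj h (2*d+3 - S i) ltac:(lia))).
      * replace (2 * d + 3 - i) with 0 by lia. simpl. rewrite Hx0. exact HC1h.
  - exact Hlen4.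
  - exists c1, (map F (seq 1 (2*d+3))). split.
    { replace (2*d+4) with (S (2*d+3)) by lia. reflexivity. }
    exists [], (map F (seq 2 (2*d+2)) ++ [c1]). left.
    replace (2*d+4) with (S (S (2*d+2))) by lia. cbn [seq map app].
    replace (F 1) with (VG G Lam (x 0)). reflexivity.
    destruct (Fcls 1 ltac:(lia)) as [[? _]|[[_ Fi]|[[? _]|[[? _]|[? _]]]]]; try lia.
    rewrite Fi; reflexivity.
Qed.

Lemma min_nat (Q : nat -> Prop) : (exists n, Q n) -> exists n, Q n /\ forall m, Q m -> n <= m.
Proof.
  intros [n Hn]. revert Hn. induction n as [n IH] using (well_founded_induction Wf_nat.lt_wf).
  intro Hn. destruct (classic (exists m, m < n /\ Q m)) as [[m [Hm Qm]]|Hno].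
  - exact (IH m Hm Qm).
  - exists n; split; auto. intros m Qm. destruct (Nat.le_gt_cases n m); auto.
    exfalso; apply Hno; eauto.
Qed.

Lemma finite_union {T A : Type} (l : list A) (Q : A -> T -> Prop) :
  (forall p, In p l -> finite_set (Q p)) -> finite_set (fun t => exists p, In p l /\ Q p t).
Proof.
  induction l as [|p l IH]; intro H.
  - exists []; intros t [q [[] _]].
  - destruct (H p (or_introl eq_refl)) as [L1 H1].
    destruct IH as [L2 H2]. { intros q Hq; apply H; right; auto. }
    exists (L1 ++ L2). intros t [q [[E|Hq] Qt]]; apply in_or_app.
    + subst; left; auto.
    + right; apply H2; eauto.
Qed.

Lemma H_fin (G : Group) (Lam : Type) (P : Lam -> G -> Prop) (Sg : list G)
  (l1 l2 : Lam) (C1 C2 : G -> Prop) :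
  generates G Sg -> (forall l, is_subgroup G (P l)) ->
  graph_fine (valid_vtx G Lam P) (cone_adj G Lam Sg) ->
  valid_vtx G Lam P (VW G Lam l1 C1) -> valid_vtx G Lam P (VW G Lam l2 C2) ->
  VW G Lam l1 C1 <> VW G Lam l2 C2 ->
  finite_set (fun h => act G Lam h (VW G Lam l1 C1) = VW G Lam l1 C1 /\
                       act G Lam h (VW G Lam l2 C2) = VW G Lam l2 C2).
Proof.
  intros Hgen Hsub Hfine Hv1 Hv2 Hne.
  assert (Hnon : forall l C, valid_vtx G Lam P (VW G Lam l C) -> exists a, C a).
  { intros l C [k Ek]. exists k. rewrite Ek. exists gone. split.
    - apply (Hsub l). - symmetry; apply g_mulg1. }
  destruct (Hnon _ _ Hv1) as [a0 Ha0]. destruct (Hnon _ _ Hv2) as [b0 Hb0].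
  destruct (min_nat (fun d => exists a b w, C1 a /\ C2 b /\ Forall (letter G Sg) w /\
              length w = d /\ gmul a (word_eval G w) = b)) as [d [[a [b [w [Ha [Hb [Hw [Hl Hab]]]]]]] Hmin]].
  { destruct (Hgen (gmul (ginv a0) b0)) as [w [Hw Ew]].
    exists (length w), a0, b0, w. repeat split; auto. rewrite <- Ew. apply g_VK. }
  destruct (core_fin G Lam P Sg l1 l2 C1 C2 d a b w Hfine Hv1 Hv2 Hne Ha Hb Hw Hl Hab)
    as [L HL].
  { intros a' b' w' Ha' Hb' Hw' E. apply Hmin. exists a', b', w'; auto. }
  exists L. intros h [E1 E2]. apply HL. simpl in E1, E2.
  injection E1 as E1. injection E2 as E2.
  split; intro y.
  - rewrite (equal_f E1 y). reflexivity.
  - rewrite (equal_f E2 y). reflexivity.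
Qed.

Theorem corollary2p3 (G : Group) (Lam : Type) (P : Lam -> G -> Prop)
  (S : list G) (n : nat) :
  (exists LL : list Lam, forall l, In l LL) ->
  generates G S ->
  rel_hyperbolic G Lam P S ->
  1 <= n ->
  forall sigma : list (vtx G Lam),
    rips_simplex G Lam P S n sigma -> 2 <= length sigma ->
    finite_set (stabiliser G Lam (barycentre G Lam sigma)).
Proof.
  intros _ Hgen [Hsub [Hfine _]] _ sigma [_ [Hnd [Hval _]]] Hlen.
  assert (Hmove : forall g u, stabiliser G Lam (barycentre G Lam sigma) g ->
             In u sigma -> In (act G Lam g u) sigma).
  { intros g u Hg Hu. specialize (Hg (act G Lam g u)). unfold act_pt in Hg.
    rewrite act_VK in Hg. unfold barycentre in Hg.
    destruct (excluded_middle_informative (In u sigma)) as [_|C]; [|contradiction].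
    destruct (excluded_middle_informative (In (act G Lam g u) sigma)) as [I|_]; auto.
    exfalso. apply (Rinv_neq_0_compat (INR (length sigma))).
    - apply not_0_INR; lia.
    - exact Hg. }
  assert (HVG : forall k, In (VG G Lam k) sigma ->
            finite_set (stabiliser G Lam (barycentre G Lam sigma))).
  { intros k Hk.
    exists (map (fun v => match v with VG _ _ y => gmul y (ginv k) | _ => gone end) sigma).
    intros g Hg. apply in_map_iff. exists (VG G Lam (gmul g k)). split.
    - rewrite <- gmulA, g_mulgV, g_mulg1. reflexivity.
    - exact (Hmove g _ Hg Hk). }
  destruct sigma as [|u1 [|u2 rest]]; simpl in Hlen; try lia.
  assert (Hne : u1 <> u2).
  { intro E; subst. inversion Hnd; subst. apply H1; left; auto. }
  destruct u1 as [k|l1 C1]. { apply (HVG k); left; auto. }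
  destruct u2 as [k|l2 C2]. { apply (HVG k); right; left; auto. }
  set (sg := VW G Lam l1 C1 :: VW G Lam l2 C2 :: rest) in *.
  assert (Hv1 : valid_vtx G Lam P (VW G Lam l1 C1)).
  { rewrite Forall_forall in Hval; apply Hval; left; auto. }
  assert (Hv2 : valid_vtx G Lam P (VW G Lam l2 C2)).
  { rewrite Forall_forall in Hval; apply Hval; right; left; auto. }
  destruct (H_fin G Lam P S l1 l2 C1 C2 Hgen Hsub Hfine Hv1 Hv2 Hne) as [LH HLH].
  destruct (finite_union (list_prod sg sg)
     (fun p g => act G Lam g (VW G Lam l1 C1) = fst p /\ act G Lam g (VW G Lam l2 C2) = snd p))
     as [L HL].
  { intros [v1 v2] _. cbn [fst snd].
    destruct (classic (exists g0, act G Lam g0 (VW G Lam l1 C1) = v1 /\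
                                   act G Lam g0 (VW G Lam l2 C2) = v2)) as [[g0 [E1 E2]]|No].
    - exists (map (gmul g0) LH). intros g [F1 F2]. apply in_map_iff.
      exists (gmul (ginv g0) g). split; [apply g_VK|]. apply HLH.
      rewrite !act_mul, F1, F2, <- E1, <- E2, !act_VK. auto.
    - exists []. intros g Hg; exfalso; apply No; eauto. }
  exists L. intros g Hg. apply HL.
  exists (act G Lam g (VW G Lam l1 C1), act G Lam g (VW G Lam l2 C2)). split; [|auto].
  apply in_prod; apply Hmove; auto; unfold sg; simpl; auto.
Qed.
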